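(* For every $k\ge0$, \[ \psi_k(z)=\frac{t^{k+1}}{z^{2k+1}(1-t)}\cdot\frac{\mu_3^{k+1}-\mu_2^{k+1}}{\mu_3-\mu_2} =\frac{t^{k+1}}{z^{2k+1}(1-t)}\sum_{i=0}^{\lfloor k/2\rfloor}(-1)^i\binom{k-i}{i}(2-t)^{k-2i}(1-t)^{2i}, \] and $\varphi_0(z)=\dfrac1{1-t}$, $\varphi_k(z)=\dfrac1z\psi_{k-1}(z)-\psi_{k-2}(z)$ for $k\ge1$ (with $\psi_{-1}=0$).
   Context: The numbers $c_{n,k},d_{n,k}$ ($n,k\ge0$) count partial reverse S-Motzkin paths (S-Motzkin paths read from right to left, stopped after $n$ steps) ending at height $k$ whose last non-up step is a level step, resp. a down step; equivalently they are defined by $c_{0,0}=1$, $d_{0,0}=0$, $c_{0,k}=d_{0,k}=0$ for $k\ge1$, and for $n\ge1$, $k\ge0$: $c_{n,k}=c_{n-1,k-1}+d_{n-1,k}$, $d_{n,k}=d_{n-1,k-1}+c_{n-1,k+1}$, with $c_{n-1,-1}=d_{n-1,-1}=0$. $\varphi_k(z)=\sum_{n\ge0}c_{n,k}z^n$, $\psi_k(z)=\sum_{n\ge0}d_{n,k}z^n$. $t$ is the power series in $z$ with $z^3=t(1-t)^2$, $t=z^3+O(z^6)$; $\mu_2,\mu_3$ are the roots of $X^2-(2-t)X+(1-t)^2$ (explicitly $\mu_{2,3}=(2-t\mp\sqrt{4t-3t^2})/2$). *)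

(* Defs.v *)
(* Formal power series over rat are represented by their
   coefficient sequences (nat -> rat); equality of series is pointwise (=1). *)
From mathcomp Require Import all_boot all_order all_algebra.
Set Implicit Arguments. Unset Strict Implicit. Unset Printing Implicit Defensive.
Import GRing.Theory Num.Theory.
Local Open Scope ring_scope.

Definition fps := nat -> rat.

Definition fC (a : rat) : fps := fun n => if n is 0%N then a else 0.
Definition fX : fps := fun n => if n == 1%N then 1 else 0.
Definition fadd (f g : fps) : fps := fun n => f n + g n.
Definition fopp (f : fps) : fps := fun n => - f n.
Definition fsub (f g : fps) : fps := fadd f (fopp g).
Definition fscale (a : rat) (f : fps) : fps := fun n => a * f n.
Definition fmul (f g : fps) : fps := fun n => \sum_(i < n.+1) f i * g (n - i)%N.
Definition fexp (f : fps) (m : nat) : fps := iter m (fmul f) (fC 1).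
Definition fsum (m : nat) (F : nat -> fps) : fps := fun n => \sum_(i < m) F i n.
(** substitution z := w^2 : a series in z seen as a series in w = z^(1/2)
    (used to host the Puiseux series mu_2, mu_3). *)
Definition fup (f : fps) : fps := fun n => if odd n then 0 else f n./2.

Fixpoint c (n k : nat) {struct n} : nat :=
  match n with
  | 0 => (k == 0)%N
  | n'.+1 => ((if k is k'.+1 then c n' k' else 0) + d n' k)%N
  end
with d (n k : nat) {struct n} : nat :=
  match n with
  | 0 => 0%N
  | n'.+1 => ((if k is k'.+1 then d n' k' else 0) + c n' k.+1)%N
  end.

Definition phi (k : nat) : fps := fun n => (c n k)%:R.
Definition psi (k : nat) : fps := fun n => (d n k)%:R.
Definition psi_prev (k : nat) : fps :=
  if k is k'.+1 then psi k' else fun _ => 0.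

Definition is_t (t : fps) : Prop :=
  fexp fX 3 =1 fmul t (fexp (fsub (fC 1) t) 2) /\
  forall n, (n < 6)%N -> t n = fexp fX 3 n.

Definition cheb_sum (t : fps) (k : nat) : fps :=
  fsum (k./2).+1 (fun i =>
    fscale ((-1) ^+ i * ('C(k - i, i))%:R)
      (fmul (fexp (fsub (fC 2) t) (k - 2 * i)) (fexp (fsub (fC 1) t) (2 * i)))).

Definition is_sqrt_disc (t s : fps) : Prop :=
  fmul s s =1 fup (fsub (fscale 4 t) (fscale 3 (fexp t 2))).

Definition mu2 (t s : fps) : fps := fscale (1 / 2) (fsub (fup (fsub (fC 2) t)) s).
Definition mu3 (t s : fps) : fps := fscale (1 / 2) (fadd (fup (fsub (fC 2) t)) s).

(* Main.v *)
Require Import Defs.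
From HB Require Import structures.
From mathcomp Require Import all_boot all_order all_algebra.
From mathcomp Require Import ring zify.
From mathcomp.classical Require Import boolp.
Set Implicit Arguments. Unset Strict Implicit. Unset Printing Implicit Defensive.
Import GRing.Theory Num.Theory.
Local Open Scope ring_scope.

Definition agree (N : nat) (P : {poly rat}) (f : fps) := forall i, (i < N)%N -> P`_i = f i.
Definition tr (N : nat) (f : fps) : {poly rat} := \poly_(i < N) f i.

Lemma agree_tr N f : agree N (tr N f) f.
Proof. by move=> i Hi; rewrite coef_poly Hi. Qed.
Arguments agree_tr : clear implicits.

Lemma agree_mul N P Q f g : agree N P f -> agree N Q g -> agree N (P * Q) (fmul f g).
Proof.
move=> HP HQ i Hi; rewrite coefM /fmul; apply: eq_bigr => j _.
rewrite HP ?HQ //; last by apply: leq_ltn_trans Hi; rewrite -ltnS.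
by apply: leq_ltn_trans Hi; rewrite leq_subr.
Qed.

Lemma agree_add N P Q f g : agree N P f -> agree N Q g -> agree N (P + Q) (fadd f g).
Proof. by move=> HP HQ i Hi; rewrite coefD HP ?HQ. Qed.

Lemma agree_opp N P f : agree N P f -> agree N (- P) (fopp f).
Proof. by move=> HP i Hi; rewrite coefN HP. Qed.

Lemma agree_C N a : agree N a%:P (fC a).
Proof. by move=> [|i] Hi; rewrite coefC. Qed.
Arguments agree_C : clear implicits.

Lemma agree_eq N P Q f g : agree N P f -> agree N Q g -> P = Q -> forall i, (i < N)%N -> f i = g i.
Proof. by move=> HP HQ E i Hi; rewrite -HP // -HQ // E. Qed.

Lemma fmulA : associative fmul.
Proof.
move=> f g h; apply: funext => n.
have Hf := agree_tr n.+1 f; have Hg := agree_tr n.+1 g; have Hh := agree_tr n.+1 h.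
apply: (agree_eq (agree_mul Hf (agree_mul Hg Hh)) (agree_mul (agree_mul Hf Hg) Hh)) => //.
by rewrite mulrA.
Qed.

Lemma fmulC : commutative fmul.
Proof.
move=> f g; apply: funext => n.
have Hf := agree_tr n.+1 f; have Hg := agree_tr n.+1 g.
by apply: (agree_eq (agree_mul Hf Hg) (agree_mul Hg Hf)) => //; rewrite mulrC.
Qed.

Lemma fmul1 : left_id (fC 1) fmul.
Proof.
move=> f; apply: funext => n.
have Hf := agree_tr n.+1 f.
by apply: (agree_eq (agree_mul (agree_C _ 1) Hf) Hf) => //; rewrite mul1r.
Qed.

Lemma fmulDl : left_distributive fmul fadd.
Proof.
move=> f g h; apply: funext => n.
have Hf := agree_tr n.+1 f; have Hg := agree_tr n.+1 g; have Hh := agree_tr n.+1 h.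
apply: (agree_eq (agree_mul (agree_add Hf Hg) Hh) (agree_add (agree_mul Hf Hh) (agree_mul Hg Hh))) => //.
by rewrite mulrDl.
Qed.

Lemma faddA : associative fadd.
Proof. by move=> f g h; apply: funext => n; rewrite /fadd addrA. Qed.
Lemma faddC : commutative fadd.
Proof. by move=> f g; apply: funext => n; rewrite /fadd addrC. Qed.
Lemma fadd0 : left_id (fC 0) fadd.
Proof. by move=> f; apply: funext => -[|n]; rewrite /fadd /= add0r. Qed.
Lemma faddN : left_inverse (fC 0) fopp fadd.
Proof. by move=> f; apply: funext => -[|n]; rewrite /fadd /fopp /= addNr. Qed.
Lemma fone_neq0 : fC 1 != fC 0.
Proof. apply/eqP => /(congr1 (fun f => f 0%N)) /= /eqP; by rewrite oner_eq0. Qed.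

HB.instance Definition _ := gen_eqMixin fps.
HB.instance Definition _ := gen_choiceMixin fps.
HB.instance Definition _ := GRing.isZmodule.Build fps faddA faddC fadd0 faddN.
HB.instance Definition _ := GRing.Zmodule_isComNzRing.Build fps fmulA fmulC fmul1 fmulDl fone_neq0.

Lemma mulE (f g : fps) : fmul f g = f * g. Proof. by []. Qed.
Lemma addE (f g : fps) : fadd f g = f + g. Proof. by []. Qed.
Lemma subE (f g : fps) : fsub f g = f - g. Proof. by []. Qed.
Lemma oneE : fC 1 = 1 :> fps. Proof. by []. Qed.
Lemma expE (f : fps) m : fexp f m = f ^+ m.
Proof. by elim: m => [|m IH] //=; rewrite /fexp /= -/(fexp f m) IH exprS. Qed.

Lemma agree_X N : agree N 'X fX.
Proof. by move=> i _; rewrite coefX /fX; case: (i == 1)%N. Qed.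
Arguments agree_X : clear implicits.

Lemma fXmulE f n : (fX * f) n = if n is n'.+1 then f n' else 0.
Proof.
have := agree_mul (agree_X n.+1) (agree_tr n.+1 f) (ltnSn n).
rewrite -mulE => <-; rewrite coefXM; case: n => [|n] //=.
by rewrite coef_poly ltnW.
Qed.

Lemma fX_inj f g : fX * f = fX * g -> f = g.
Proof. by move=> E; apply: funext => n; move/(congr1 (fun h => h n.+1)): E; rewrite !fXmulE. Qed.

Lemma fCD a b : fC (a + b) = fC a + fC b.
Proof. by apply: funext => -[|n] //=; rewrite -addE /fadd /= addr0. Qed.
Lemma fCN a : fC (- a) = - fC a.
Proof. by apply: funext => -[|n] //=; rewrite /GRing.opp /= /fopp /= oppr0. Qed.
Lemma fCM a b : fC (a * b) = fC a * fC b.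
Proof.
apply: funext => n.
by apply: (agree_eq (agree_C n.+1 _) (agree_mul (agree_C n.+1 a) (agree_C n.+1 b))) => //; rewrite polyCM.
Qed.
Lemma fC0 : fC 0 = 0. Proof. by []. Qed.
Lemma fCn m : fC m%:R = m%:R.
Proof. elim: m => [|m IH]; first by rewrite fC0. by rewrite -[m.+1]addn1 !natrD fCD IH !mulr1n. Qed.
Lemma fscaleE a f : fscale a f = fC a * f.
Proof.
apply: funext => n.
have := agree_mul (agree_C n.+1 a) (agree_tr n.+1 f) (ltnSn n).
by rewrite -mulE => <-; rewrite coefCM coef_poly ltnSn.
Qed.

Lemma agree_up N P f : agree N P f -> agree (N.*2) (P \Po 'X^2) (fup f).
Proof.
move=> HP i Hi; rewrite coef_comp_poly_Xn // /fup dvdn2.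
case: (boolP (odd i)) => //= Ho; rewrite HP -?divn2 //.
by rewrite -muln2 in Hi; rewrite ltn_divLR.
Qed.

Lemma fupM f g : fup (f * g) = fup f * fup g.
Proof.
apply: funext => n.
have Hf := agree_tr n.+1 f; have Hg := agree_tr n.+1 g.
apply: (agree_eq (agree_up (agree_mul Hf Hg)) (agree_mul (agree_up Hf) (agree_up Hg))).
  by rewrite comp_polyM.
by rewrite -addnn; apply: leq_trans (leq_addr _ _).
Qed.
Lemma fupD f g : fup (f + g) = fup f + fup g.
Proof. by apply: funext => n; rewrite -!addE /fadd /fup; case: odd; rewrite ?addr0. Qed.
Lemma fupN f : fup (- f) = - fup f.
Proof. by apply: funext => n; rewrite /GRing.opp /= /fopp /fup; case: odd; rewrite ?oppr0. Qed.
Lemma fupB f g : fup (f - g) = fup f - fup g.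
Proof. by rewrite fupD fupN. Qed.
Lemma fupC a : fup (fC a) = fC a.
Proof. by apply: funext => -[|[|n]] //=; rewrite /fup /=; case: odd. Qed.
Lemma fup1 : fup 1 = 1. Proof. exact: fupC. Qed.
Lemma fupX f m : fup (f ^+ m) = fup f ^+ m.
Proof. by elim: m => [|m IH]; rewrite ?fup1 // !exprS fupM IH. Qed.
Lemma fupfX : fup fX = fX * fX.
Proof.
apply: funext => n; rewrite fXmulE; case: n => [|n] //.
case: n => [|[|k]] //; rewrite /fup /fX /=; case: ifP => // Hk; case: k Hk => [|k] //=.
Qed.

Definition eqb (m : nat) (f g : fps) := forall i, (i < m)%N -> f i = g i.

Lemma eqb_mul m f f' g g' : eqb m f f' -> eqb m g g' -> eqb m (f * g) (f' * g').
Proof.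
move=> Hf Hg i Hi; rewrite -!mulE /fmul; apply: eq_bigr => j _.
rewrite Hf ?Hg //; last by apply: leq_ltn_trans Hi; rewrite -ltnS.
by apply: leq_ltn_trans Hi; rewrite leq_subr.
Qed.
Lemma eqb_add m f f' g g' : eqb m f f' -> eqb m g g' -> eqb m (f + g) (f' + g').
Proof. by move=> Hf Hg i Hi; rewrite -!addE /fadd Hf ?Hg. Qed.
Lemma eqb_opp m f f' : eqb m f f' -> eqb m (- f) (- f').
Proof. by move=> Hf i Hi; rewrite /GRing.opp /= /fopp Hf. Qed.
Lemma eqb_refl m f : eqb m f f. Proof. by []. Qed.
Lemma eqb_X m f g : eqb m f g -> eqb m.+1 (fX * f) (fX * g).
Proof. by move=> H [|i] Hi; rewrite !fXmulE // H. Qed.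
Lemma eqb_le m n f g : eqb m f g -> (n <= m)%N -> eqb n f g.
Proof. by move=> H Hn i Hi; apply: H; apply: leq_trans Hn. Qed.
Lemma eqb_trans m f g h : eqb m f g -> eqb m g h -> eqb m f h.
Proof. by move=> H1 H2 i Hi; rewrite H1 ?H2. Qed.

Definition contractive (F : fps -> fps) := forall m f g, eqb m f g -> eqb m.+1 (F f) (F g).

Lemma fixpoint F : contractive F -> exists x, F x = x.
Proof.
move=> HF; pose it k := iter k F 0.
have H1 : forall k, eqb k (it k) (it k.+1).
  elim=> [|k IH]; first by [].
  by have := HF _ _ _ IH.
have H2 : forall k j, (k <= j)%N -> eqb k (it k) (it j).
  move=> k; elim=> [|j IH] Hkj.
    by case: k Hkj.
  case: (ltngtP k j.+1) Hkj => // [Hlt|->] _; last by [].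
  apply: eqb_trans (IH Hlt) _; apply: eqb_le (H1 j) _; exact: Hlt.
exists (fun n => it n.+1 n); apply: funext => n.
have E : eqb n.+1 (fun n => it n.+1 n) (it n.+1).
  move=> i Hi; apply: (H2 i.+1 n.+1) => //.
have := HF _ _ _ E n (ltnW (ltnSn _)) => ->.
by rewrite (H1 n.+1).
Qed.

Lemma zeroE n : (0 : fps) n = 0. Proof. by case: n. Qed.
Lemma X3E g : fX ^+ 3 * g = fX * (fX * (fX * g)). Proof. by ring. Qed.

Lemma eqb_X3_0 g : eqb 3 (fX * (fX * (fX * g))) 0.
Proof. by move=> [|[|[|i]]] //= _; rewrite !fXmulE. Qed.

Lemma exists_t : exists t, is_t t.
Proof.
have [w Hw] : exists w, 1 + fX * (fX * (fX * (w * w * w))) = w.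
  apply: fixpoint => m f g H.
  apply: eqb_add => //; apply: eqb_le (eqb_X (eqb_X (eqb_X (eqb_mul (eqb_mul H H) H)))) _.
  by rewrite !ltnS ltnW.
exists (fX ^+ 3 * w ^+ 2).
have Hw1 : w * (1 - fX ^+ 3 * w ^+ 2) = 1.
  have -> : w * (1 - fX ^+ 3 * w ^+ 2) = w - fX ^+ 3 * (w * w * w) by ring.
  by rewrite -{1}Hw; ring.
split.
  move=> n; rewrite expE mulE expE subE oneE.
  suff -> : fX ^+ 3 * w ^+ 2 * (1 - fX ^+ 3 * w ^+ 2) ^+ 2 = fX ^+ 3 by [].
  by rewrite -[RHS]mulr1 -(expr1n _ 2) -{2}Hw1; ring.
have Hw3 : eqb 3 w 1.
  rewrite -Hw => i Hi; rewrite -addE /fadd (eqb_X3_0 _ Hi) zeroE addr0 //.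
have H6 : eqb 6 (fX ^+ 3 * w ^+ 2) (fX ^+ 3 * 1).
  rewrite !X3E; apply: eqb_X; apply: eqb_X; apply: eqb_X.
  rewrite expr2 -(mulr1 1); exact: eqb_mul.
by move=> n Hn; rewrite H6 // mulr1 expE.
Qed.

Lemma oneE0 : (1 : fps) 0%N = 1. Proof. by []. Qed.
Lemma oneES n : (1 : fps) n.+1 = 0. Proof. by []. Qed.
Lemma addEn (f g : fps) n : (f + g) n = f n + g n. Proof. by []. Qed.

Lemma unique_cd (F G : nat -> fps) :
 (forall k, F k = (if k is 0 then 1 else 0) + fX * (if k is k'.+1 then F k' else 0) + fX * G k) ->
 (forall k, G k = fX * (if k is k'.+1 then G k' else 0) + fX * F k.+1) ->
 forall k, F k = phi k /\ G k = psi k.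
Proof.
move=> HF HG.
suff H : forall n k, F k n = (c n k)%:R /\ G k n = (d n k)%:R.
  by move=> k; split; apply: funext => n; case: (H n k).
elim=> [|n IH] k; split.
- by rewrite HF !addEn !fXmulE !addr0 /=; case: k => [|k] //=; rewrite zeroE.
- by rewrite HG !addEn !fXmulE !addr0.
- rewrite HF !addEn !fXmulE /=.
  case: k => [|k] /=; rewrite ?oneES ?zeroE add0r.
    by rewrite add0n (proj2 (IH 0%N)).
  by rewrite natrD (proj1 (IH k)) (proj2 (IH k.+1)).
- rewrite HG !addEn !fXmulE /=.
  case: k => [|k] /=; rewrite ?zeroE ?add0r.
    by rewrite add0n (proj1 (IH 1%N)).
  by rewrite natrD (proj2 (IH k)) (proj1 (IH k.+2)).
Qed.

Section Cheb.
Variable R : comNzRingType.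
Variables e p : R.
Definition T k i : R := (-1) ^+ i * ('C(k - i, i))%:R * (e ^+ (k - 2 * i) * p ^+ i).
Definition S N k := \sum_(i < N) T k i.
Definition U k := S (k./2).+1 k.

Lemma T_0 k i : (k./2 < i)%N -> T k i = 0.
Proof. by move=> H; rewrite /T bin_small ?mulr0 ?mul0r //; lia. Qed.

Lemma S_ext N k : (k./2 < N)%N -> S N k = U k.
Proof.
elim: N => [|N IH] H; first by [].
rewrite ltnS leq_eqVlt in H; case/orP: H => [/eqP <-|Hl] //.
by rewrite /S big_ord_recr /= -/(S N k) IH // T_0 // addr0.
Qed.

Lemma T_rec k i : T k.+2 i.+1 = e * T k.+1 i.+1 - p * T k i.
Proof.
rewrite /T.
case: (leqP i k) => Hik.
  have -> : (k.+2 - i.+1 = (k - i).+1)%N by lia.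
  have -> : (k.+1 - i.+1 = k - i)%N by lia.
  rewrite binS natrD.
  case: (leqP (2 * i).+1 k) => H2.
    have -> : (k.+2 - 2 * i.+1 = k - 2 * i)%N by lia.
    have -> : (k.+1 - 2 * i.+1 = (k - 2 * i).-1)%N by lia.
    have E : e ^+ (k - 2 * i) = e * e ^+ (k - 2 * i).-1.
      by rewrite -exprS; congr (_ ^+ _); lia.
    rewrite E !exprS; ring.
  rewrite (bin_small (n := k - i)); last by lia.
  have -> : (k.+2 - 2 * i.+1 = k - 2 * i)%N by lia.
  rewrite !exprS; ring.
rewrite !bin_small; try lia.
by rewrite !mulr0 !mul0r !mulr0 subr0.
Qed.

Lemma U_rec k : U k.+2 = e * U k.+1 - p * U k.
Proof.
rewrite -(S_ext (N := k.+3)); last by lia.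
rewrite -(S_ext (N := k.+3) (k := k.+1)); last by lia.
rewrite -(S_ext (N := k.+2) (k := k)); last by lia.
rewrite /S big_ord_recl [in X in e * X]big_ord_recl mulrDr.
under eq_bigr do rewrite T_rec.
rewrite sumrB -!mulr_sumr.
have -> : T k.+2 0 = e * T k.+1 0 by rewrite /T !subn0 !bin0 !expr0 !mul1r !mulr1 exprS.
have -> : \sum_(i < k.+2) T k.+1 (lift ord0 i) = \sum_(i < k.+2) T k.+1 i.+1 by [].
ring.
Qed.

Lemma U0 : U 0 = 1.
Proof. by rewrite /U /S big_ord1 /T /= bin0 !expr0 !mulr1. Qed.
Lemma U1 : U 1 = e.
Proof. by rewrite /U /S big_ord1 /T /= bin0 !expr0 !mulr1 mul1r expr1. Qed.
End Cheb.

Lemma eqfun_of (f g : fps) : f = g -> f =1 g. Proof. by move=> ->. Qed.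

Lemma sum_app (m : nat) (F : nat -> fps) n : (\sum_(i < m) F i) n = \sum_(i < m) F i n.
Proof.
exact: (big_morph (fun f : fps => f n) (fun f g => addEn f g n) (zeroE n)).
Qed.

Lemma fsumE m F : fsum m F = \sum_(i < m) F i.
Proof. by apply: funext => n; rewrite sum_app. Qed.

Lemma fCX a m : fC (a ^+ m) = fC a ^+ m.
Proof. by elim: m => [|m IH]; rewrite ?expr0 // !exprS fCM IH. Qed.

Lemma cheb_sumE t k : cheb_sum t k = U (fC 2 - t) ((1 - t) ^+ 2) k.
Proof.
rewrite /cheb_sum fsumE /U /S; apply: eq_bigr => i _.
rewrite fscaleE /T mulE !expE !subE oneE fCM fCX fCN !fCn exprM oneE //.
Qed.

Lemma pow_seq (R : comNzRingType) (a b : R) (V : nat -> R) :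
  V 0%N = 1 -> V 1%N = a + b -> (forall k, V k.+2 = (a + b) * V k.+1 - a * b * V k) ->
  forall k, (a - b) * V k = a ^+ k.+1 - b ^+ k.+1.
Proof.
move=> H0 H1 H2.
suff H : forall k, (a - b) * V k = a ^+ k.+1 - b ^+ k.+1 /\ (a - b) * V k.+1 = a ^+ k.+2 - b ^+ k.+2.
  by move=> k; case: (H k).
elim=> [|k [IH1 IH2]].
  by rewrite H0 H1; split; ring.
split => //.
have -> : (a - b) * V k.+2 = (a + b) * ((a - b) * V k.+1) - a * b * ((a - b) * V k) by rewrite H2; ring.
rewrite IH1 IH2 !exprS; ring.
Qed.

Section Main.
Variables t u w : fps.
Hypothesis Ht : t = fX ^+ 3 * u.
Hypothesis Hu : u * (1 - t) ^+ 2 = 1.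
Hypothesis Hw : w * (1 - t) = 1.

Let e := fC 2 - t.
Let p := (1 - t) ^+ 2.
Let Uc k := U e p k.
Let Up k := if k is k'.+1 then Uc k' else 0.
Let Psi k := fX ^+ k.+2 * u ^+ k.+1 * w * Uc k.
Let Phi k := if k is k'.+1 then fX ^+ k'.+1 * u ^+ k' * w * (u * Uc k' - Up k') else w.

Lemma Uc_rec k : Uc k.+1 = e * Uc k - p * Up k.
Proof.
case: k => [|k]; first by rewrite /Uc U1 U0 /=; ring.
exact: U_rec.
Qed.

Lemma fC2 : fC 2 = 2. Proof. exact: (fCn 2). Qed.

Lemma R2 k : Psi k = fX * (if k is k'.+1 then Psi k' else 0) + fX * Phi k.+1.
Proof.
case: k => [|k]; rewrite /Psi /Phi /=.
  rewrite !exprS; ring.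
rewrite !exprS; ring.
Qed.

Lemma R1 k : Phi k = (if k is 0 then 1 else 0) + fX * (if k is k'.+1 then Phi k' else 0) + fX * Psi k.
Proof.
have Hw' : w * (1 - fX ^+ 3 * u) = 1 by rewrite -Ht.
have Hu' : u * (1 - fX ^+ 3 * u) ^+ 2 = 1 by rewrite -Ht.
case: k => [|[|m]]; rewrite /Psi /Phi /=.
- rewrite /Uc U0; apply/eqP; rewrite -subr_eq0; apply/eqP.
  transitivity (w * (1 - fX ^+ 3 * u) - 1); first by ring.
  by rewrite Hw' subrr.
- rewrite /Uc U0 U1 /e fC2 Ht; apply/eqP; rewrite -subr_eq0; apply/eqP.
  transitivity (fX * w * (u * (1 - fX ^+ 3 * u) ^+ 2 - 1)); first by rewrite !exprS; ring.
  by rewrite Hu' subrr mulr0.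
- rewrite -/(Uc m.+2) -/(Uc m.+1) !Uc_rec.
  rewrite /e /p fC2 Ht; apply/eqP; rewrite -subr_eq0; apply/eqP.
  transitivity (fX ^+ m.+2 * u ^+ m * w * (u * (1 - fX ^+ 3 * u) ^+ 2 - 1) *
     (2 * u * Uc m - (u * (1 - fX ^+ 3 * u) ^+ 2 + 1) * Up m)).
    have -> : Up m.+1 = Uc m by []. rewrite !exprS; ring.
  by rewrite Hu' subrr mulr0 mul0r.
Qed.

Lemma phipsi k : phi k = Phi k /\ psi k = Psi k.
Proof.
have [H1 H2] := unique_cd R1 R2 k.
by rewrite H1 H2.
Qed.
End Main.

Lemma X3coef n : (fX ^+ 3 : fps) n = if n == 3%N then 1 else 0.
Proof. by rewrite -[fX ^+ 3]mulr1 X3E; case: n => [|[|[|[|n]]]]; rewrite !fXmulE. Qed.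

Lemma t_decomp t : is_t t ->
  exists u w, [/\ t = fX ^+ 3 * u, u * (1 - t) ^+ 2 = 1 & w * (1 - t) = 1].
Proof.
move=> [H3 H6].
pose u : fps := fun n => t n.+3.
have Ht : t = fX ^+ 3 * u.
  apply: funext => n; rewrite X3E.
  case: n => [|[|[|n]]]; rewrite !fXmulE //; rewrite H6 // expE X3coef //.
have Hu : u * (1 - t) ^+ 2 = 1.
  have E : fX ^+ 3 = t * (1 - t) ^+ 2.
    by apply: funext => n; rewrite -[fX ^+ 3]expE H3 mulE expE subE oneE.
  apply: fX_inj; apply: fX_inj; apply: fX_inj; rewrite -!X3E.
  by rewrite mulrA -Ht -E mulr1.
exists u, (u * (1 - t)); split => //.
by rewrite -mulrA -expr2.
Qed.

Lemma sqrt4 (A : fps) : A 0%N = 4 -> exists r, r * r = A.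
Proof.
move=> H0.
pose A' : fps := fun n => A n.+1.
have HA : A = fC 4 + fX * A'.
  by apply: funext => -[|n]; rewrite addEn fXmulE /= ?addr0 ?add0r.
pose c4 := fC (1 / 4).
have [q Hq] : exists q, c4 * (A' - fX * (q * q)) = q.
  apply: fixpoint => m f g H.
  apply: eqb_mul => //; apply: eqb_add => //; apply: eqb_opp.
  by apply: eqb_X; apply: eqb_mul.
have H4 : fC 4 * c4 = 1 by rewrite -fCM -oneE; congr fC.
exists (fC 2 + fX * q).
have E : fC 4 * q = A' - fX * (q * q) by rewrite -{1}Hq mulrA H4 mul1r.
have E2 : fC 2 * fC 2 = fC 4 by rewrite -fCM.
apply/eqP; rewrite -subr_eq0 HA; apply/eqP.
transitivity (fX * (fC 4 * q - (A' - fX * (q * q)))); last by rewrite E subrr mulr0.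
rewrite -E2 fC2; ring.
Qed.

Theorem mainTheorem7 :
  (exists t, is_t t) /\
  forall t : fps, is_t t ->
    (forall k : nat,
       fmul (fmul (fexp fX (2 * k + 1)) (fsub (fC 1) t)) (psi k)
       =1 fmul (fexp t k.+1) (cheb_sum t k)) /\
    (exists s, is_sqrt_disc t s) /\
    (forall s : fps, is_sqrt_disc t s -> forall k : nat,
       fmul (fup (fmul (fmul (fexp fX (2 * k + 1)) (fsub (fC 1) t)) (psi k)))
            (fsub (mu3 t s) (mu2 t s))
       =1 fmul (fup (fexp t k.+1))
               (fsub (fexp (mu3 t s) k.+1) (fexp (mu2 t s) k.+1))) /\
    fmul (fsub (fC 1) t) (phi 0) =1 fC 1 /\
    (forall k : nat, fmul fX (phi k.+1) =1 fsub (psi k) (fmul fX (psi_prev k))).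
Proof.
split; first exact: exists_t.
move=> t Ht0.
have [u [w [Ht Hu Hw]]] := t_decomp Ht0.
have PP := phipsi Ht Hu Hw.
have t3 : t 3%N = 1 by rewrite (proj2 Ht0) // expE X3coef.
have t0 : t 0%N = 0 by rewrite (proj2 Ht0) // expE X3coef.
have u0 : u 0%N = 1.
  by have := congr1 (fun f : fps => f 3%N) Ht; rewrite X3E !fXmulE t3 => <-.
have A : forall k, fX ^+ (2 * k + 1) * (1 - t) * psi k = t ^+ k.+1 * U (fC 2 - t) ((1 - t) ^+ 2) k.
  move=> k; rewrite (proj2 (PP k)).
  have -> : t ^+ k.+1 = fX ^+ (2 * k + 1) * fX ^+ k.+2 * u ^+ k.+1.
    rewrite {1}Ht exprMn -exprM -exprD; congr (_ ^+ _ * _); lia.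
  set a := fX ^+ (2 * k + 1); set b := fX ^+ k.+2; set c := u ^+ k.+1.
  set V := U _ _ k.
  transitivity (a * b * c * V * (w * (1 - t))); first by ring.
  by rewrite Hw mulr1.
split.
  move=> k; rewrite !mulE !expE subE oneE cheb_sumE; apply: eqfun_of; exact: A.
split.
  pose g := u * (fC 4 - fC 3 * t).
  have [r Hr] : exists r, r * r = fup g.
    apply: sqrt4; rewrite /fup /= /g -mulE /fmul big_ord1 /= u0 mul1r subn0.
    by rewrite addEn /GRing.opp /= /fopp /= -fscaleE /fscale t0 mulr0 subr0.
  exists (fX ^+ 3 * r).
  rewrite /is_sqrt_disc mulE subE !fscaleE expE; apply: eqfun_of.
  have -> : fC 4 * t - fC 3 * t ^+ 2 = t * (fC 4 - fC 3 * t) by ring.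
  rewrite {1}Ht -[fX ^+ 3 * u * _]mulrA fupM -/g -Hr fupX fupfX; ring.
split.
  move=> s Hs k.
  rewrite /mu3 /mu2 !fscaleE !mulE !expE !subE !addE oneE A.
  apply: eqfun_of.
  set E := fup (fC 2 - t); set c := fC (1 / 2).
  set a := c * (E + s); set b := c * (E - s).
  have Hc : 2 * c = 1 by rewrite -fC2 -fCM -oneE; congr fC.
  have Hs' : s * s = fup (fC 4 * t - fC 3 * t ^+ 2).
    by apply: funext => n; rewrite -mulE Hs subE !fscaleE expE.
  have Hab : a * b = fup ((1 - t) ^+ 2).
    transitivity (c * c * (E * E - s * s)); first by rewrite /a /b; ring.
    rewrite Hs' /E -fupM -fupB.
    have -> : (fC 2 - t) * (fC 2 - t) - (fC 4 * t - fC 3 * t ^+ 2) = fC 4 * (1 - t) ^+ 2.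
      by rewrite fC2 (fCn 4) (fCn 3); ring.
    rewrite fupM fupC mulrA -!fCM.
    have -> : fC (1 / 2 * (1 / 2) * 4) = 1 by rewrite -oneE; congr fC.
    by rewrite mul1r.
  have Hapb : a + b = E.
    transitivity (E * (2 * c)); first by rewrite /a /b; ring.
    by rewrite Hc mulr1.
  have HV := @pow_seq _ a b (fun k => fup (U (fC 2 - t) ((1 - t) ^+ 2) k)).
  rewrite /= U0 U1 fup1 Hapb Hab in HV.
  have -> : a ^+ k.+1 - b ^+ k.+1 = (a - b) * fup (U (fC 2 - t) ((1 - t) ^+ 2) k).
    rewrite HV //.
    by move=> j; rewrite U_rec fupB !fupM.
  rewrite fupM; ring.
split.
  rewrite (proj1 (PP 0%N)) mulE subE oneE; apply: eqfun_of; by rewrite mulrC Hw.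
move=> k.
have Hpp : psi_prev k = if k is k'.+1 then psi k' else 0.
  by case: k => [|k] //; apply: funext => n; rewrite zeroE.
rewrite Hpp !mulE subE (proj1 (PP k.+1)) (proj2 (PP k)).
apply: eqfun_of; clear Hpp.
case: k => [|k].
  have := R2 t u w 0 => /= ->; ring.
rewrite (proj2 (PP k)).
have := R2 t u w k.+1 => /= ->; ring.
Qed.
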